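(* Let $p>2$ be a prime and $n>2$ an integer, and let $G(p,n)=\langle x,y\mid x^{p^n}=1,\ y^{p^{n-1}}=1,\ yxy^{-1}=x^{p+1}\rangle\cong\mathbb{Z}_{p^n}\rtimes\mathbb{Z}_{p^{n-1}}$. Then $G(p,n)$ is a finite nilpotent group of nilpotency class at least $n-1$, and $[e]_\varphi$ is a subgroup of $G(p,n)$ for every inner automorphism $\varphi$ of $G(p,n)$. Consequently, if $p_n$ denotes the $n$-th prime, the direct product $G=\prod_{n>2}G(p_n,n)$ is a residually nilpotent, non-nilpotent group such that $[e]_\varphi$ is a subgroup of $G$ for every inner automorphism $\varphi$ of $G$.
   Context: For an automorphism $\varphi$ of a group $G$, $[e]_\varphi=\{z^{-1}\varphi(z)\mid z\in G\}$. A group $G$ is residually nilpotent if $\bigcap_k\gamma_k(G)=\{e\}$, where $\gamma_1(G)=G$, $\gamma_{k+1}(G)=[\gamma_k(G),G]$, $[x,y]=x^{-1}y^{-1}xy$. *)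

(* Defs.v *)
From HB Require Import structures.
From mathcomp Require Import all_boot all_fingroup all_solvable.
Set Implicit Arguments. Unset Strict Implicit. Unset Printing Implicit Defensive.

Lemma next_prime_ex (m : nat) : exists p, [pred q | prime q && (m < q)] p.
Proof. by case: (prime_above m) => p Hm Hp; exists p; rewrite /= Hp Hm. Qed.

Definition next_prime (m : nat) : nat := ex_minn (next_prime_ex m).

(* nth_prime n = p_n, the n-th prime (for n >= 1) *)
Definition nth_prime (n : nat) : nat := iter n next_prime 1.

(* A group is given by a carrier type T with operations mul, inv, one.
   The whole carrier is the group. *)
Section AbstractGroup.
Variables (T : Type) (mul : T -> T -> T) (inv : T -> T) (one : T).

Definition acomm (x y : T) : T := mul (mul (mul (inv x) (inv y)) x) y.

Inductive agen (S : T -> Prop) : T -> Prop :=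
  | agen_one : agen S one
  | agen_in x : S x -> agen S x
  | agen_mul x y : agen S x -> agen S y -> agen S (mul x y)
  | agen_inv x : agen S x -> agen S (inv x).

(* lower central series: lcs 0 = gamma_1(G) = G,
   lcs k.+1 = gamma_{k+2}(G) = [gamma_{k+1}(G), G] *)
Fixpoint lcs (k : nat) : T -> Prop :=
  match k with
  | 0 => fun _ => True
  | k'.+1 => agen (fun t => exists a b, lcs k' a /\ t = acomm a b)
  end.

Definition is_subgroup (S : T -> Prop) : Prop :=
  [/\ S one, (forall x y, S x -> S y -> S (mul x y)) & (forall x, S x -> S (inv x))].

Definition anilpotent : Prop := exists k, forall x, lcs k x -> x = one.

Definition aresidually_nilpotent : Prop :=
  forall x, (forall k, lcs k x) -> x = one.

Definition ainner (g : T) : T -> T := fun z => mul (mul g z) (inv g).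

Definition twisted_class_e (phi : T -> T) : T -> Prop :=
  fun t => exists z, t = mul (inv z) (phi z).

End AbstractGroup.

Section DirectProduct.
Variable gT : nat -> finGroupType.
Definition dprodT := forall k : nat, gT k.
Definition dprod_mul (f g : dprodT) : dprodT := fun k => (f k * g k)%g.
Definition dprod_inv (f : dprodT) : dprodT := fun k => ((f k)^-1)%g.
Definition dprod_one : dprodT := fun k => 1%g.
End DirectProduct.

Definition twisted_class_inner (gT : finGroupType) (G : {set gT}) (g : gT) : {set gT} :=
  [set (z^-1 * (g * z * g^-1))%g | z in G].

(* Main.v *)
Require Import Defs.
From Stdlib Require Import FunctionalExtensionality.
From Stdlib Require PeanoNat.
From HB Require Import structures.
From mathcomp Require Import all_boot all_fingroup all_solvable all_algebra.
From mathcomp Require Import zify.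
Set Implicit Arguments. Unset Strict Implicit. Unset Printing Implicit Defensive.
Local Open Scope group_scope.

Lemma aut_s (p n : nat) : prime p -> odd p -> 1 < n ->
  exists s, [/\ s \in Aut <[Zp1 : 'Z_(p ^ n)]>, #[s] = (p ^ n.-1)%N
          & s Zp1 = (Zp1 : 'Z_(p ^ n)) ^+ p.+1].
Proof.
move=> pp op n1.
set b := (Zp1 : 'Z_(p ^ n)).
have q1 : 1 < p ^ n.
  have p1 := prime_gt1 pp. by rewrite -(expn0 p) ltn_exp2l // ltnW.
have ob : #[b] = (p ^ n)%N by rewrite order_Zp1 Zp_cast.
have cB : #|<[b]>| = (p ^ n)%N by rewrite -orderE.
have pB : p.-group <[b]> by rewrite /pgroup cB pnatX pnat_id.
have ntB : <[b]> != 1 by rewrite -cardG_gt1 cB.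
have := cyclic_pgroup_Aut_structure pB (cycle_cyclic b) ntB.
rewrite /= cB pfactorK //.
case=> m [[mE _ _ _ _] _].
have -> : (n.-1 == 0) = false by apply/negbTE; rewrite -lt0n; lia.
case=> t [_ _ _]; rewrite op; case=> _ [s [As os ms _]] _.
exists s; split=> //.
rewrite -(mE s b As (cycle_id b)) ms.
have bq : b ^+ (p ^ n) = 1 by apply/eqP; rewrite -order_dvdn ob.
by rewrite val_Zp_nat // expg_mod.
Qed.

Lemma r_ord (p n k : nat) : prime p -> odd p -> 1 < n ->
  p.+1 ^ k = 1 %[mod p ^ n] -> p ^ n.-1 %| k.
Proof.
move=> pp op n1 hk.
have [s [As os sb]] := aut_s pp op n1.
set b := (Zp1 : 'Z_(p ^ n)) in As sb *.
have q1 : 1 < p ^ n.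
  have p1 := prime_gt1 pp. by rewrite -(expn0 p) ltn_exp2l // ltnW.
have ob : #[b] = (p ^ n)%N by rewrite order_Zp1 Zp_cast.
have bq : b ^+ (p ^ n) = 1 by apply/eqP; rewrite -order_dvdn ob.
have sk : forall j, (s ^+ j) b = b ^+ (p.+1 ^ j).
  elim=> [|j IH]; first by rewrite expg0 perm1 expn0 expg1.
  rewrite expgSr permM IH -(autmE As) morphX ?cycle_id //= autmE // sb.
  by rewrite -expgM expnS.
have skb : (s ^+ k) b = b by rewrite sk -(expg_mod _ bq) hk modn_small // expg1.
rewrite -os order_dvdn; apply/eqP.
  apply: (eq_Aut (groupX k As) (group1 _)) => // c /cycleP [i ->].
  rewrite -(autmE (groupX k As)) morphX ?cycle_id //= autmE ?groupX //.
  by rewrite skb perm1.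
Qed.

Lemma rk_modp (p k : nat) : 1 < p -> p.+1 ^ k %% p = 1%N.
Proof.
move=> p1; rewrite -modnXm -addn1 modnDl (modn_small p1) exp1n modn_small //.
Qed.

Lemma r_surj (p n t : nat) : prime p -> odd p -> 1 < n -> t %% p = 1%N ->
  exists k, p.+1 ^ k = t %[mod p ^ n].
Proof.
move=> pp op n1 tp.
have p1 := prime_gt1 pp.
set N := (p ^ n.-1)%N.
have QN : (p ^ n = N * p)%N by rewrite /N -expnSr prednK // ltnW.
have dpQ : p %| p ^ n by rewrite QN dvdn_mull.
have vk : forall k, (p.+1 ^ k %% p ^ n) %% p = 1%N by move=> k; rewrite modn_dvdm // rk_modp.
have fP : forall k, (p.+1 ^ k %% p ^ n) %/ p < N.
  move=> k; rewrite ltn_divLR ?prime_gt0 // -QN ltn_mod expn_gt0 prime_gt0 //.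
pose f (k : 'I_N) := Ordinal (fP k).
have finj : injective f.
  have H : forall k1 k2 : 'I_N, k1 <= k2 -> f k1 = f k2 -> k1 = k2.
    move=> k1 k2 le12 /(congr1 val) /= e.
    have e2 : p.+1 ^ k2 = p.+1 ^ k1 %[mod p ^ n].
      by rewrite (divn_eq (p.+1 ^ k2 %% p ^ n) p) (divn_eq (p.+1 ^ k1 %% p ^ n) p) !vk e.
    have : p ^ n %| p.+1 ^ k1 * (p.+1 ^ (k2 - k1) - 1).
      rewrite mulnBr muln1 -expnD subnKC // -eqn_mod_dvd; first by apply/eqP.
      by apply: leq_pexp2l.
    rewrite Gauss_dvdr; last by rewrite coprimeXr // coprimeXl // coprimenS.
    rewrite -eqn_mod_dvd ?expn_gt0 // => /eqP /r_ord -/(_ pp op n1) dN.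
    have : k2 - k1 = 0.
      case: (posnP (k2 - k1)) => // pos; have := dvdn_leq pos dN.
      by rewrite leqNgt (leq_ltn_trans (leq_subr k1 k2) (ltn_ord k2)).
    by move=> h; apply: val_inj; apply/eqP; rewrite eqn_leq le12 /= -subn_eq0 h.
  move=> k1 k2; case: (leqP k1 k2) => [le|/ltnW le] e; first exact: H.
  by apply/esym/H.
have jN : (t %% p ^ n) %/ p < N.
  rewrite ltn_divLR ?prime_gt0 // -QN ltn_mod expn_gt0 prime_gt0 //.
have [k ek] := codomP (injF_onto finj (Ordinal jN)).
exists k; move/(congr1 val): ek => /= ek.
rewrite (divn_eq (p.+1 ^ k %% p ^ n) p) (divn_eq (t %% p ^ n) p) vk -ek.
by rewrite modn_dvdm // tp.
Qed.

Lemma r_sum (p n b1 b2 : nat) : prime p -> odd p -> 1 < n ->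
  exists b3, p.+1 ^ b1 + p.+1 ^ b2 = p.+1 ^ b3 + 1 %[mod p ^ n].
Proof.
move=> pp op n1; have p1 := prime_gt1 pp.
set A := (p.+1 ^ b1)%N; set B := (p.+1 ^ b2)%N.
have eA : A = (A %/ p) * p + 1 by rewrite {1}(divn_eq A p) rk_modp.
have eB : B = (B %/ p) * p + 1 by rewrite {1}(divn_eq B p) rk_modp.
have [|b3 e] := @r_surj p n (A + B - 1) pp op n1.
  have -> : A + B - 1 = p * (A %/ p + B %/ p) + 1.
    rewrite {1}eA {1}eB mulnDr; lia.
  by rewrite mulnC modnMDl modn_small.
exists b3; rewrite -[in RHS]modnDml e modnDml subnK //.
rewrite eA; lia.
Qed.

Lemma hom_gens (gT : finGroupType) (G : {group gT}) (q P r : nat) :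
  G \homg Grp (x : y : x ^+ q, y ^+ P, y * x * y^-1 = x ^+ r) ->
  exists x y : gT, [/\ <[x]> <*> <[y]> = G, x ^+ q = 1, y ^+ P = 1
                     & y * x * y^-1 = x ^+ r].
Proof.
by case/existsP=> -[x y] /= /eqP[defG xq yP xy]; exists x, y.
Qed.

Lemma hom_gens2 (gT : finGroupType) (G : {group gT}) (q P r : nat) :
  G \homg Grp (x : y : x ^+ q, y ^+ P, x ^ y = x ^+ r) ->
  exists x y : gT, [/\ <[x]> <*> <[y]> = G, x ^+ q = 1, y ^+ P = 1
                     & x ^ y = x ^+ r].
Proof.
by case/existsP=> -[x y] /= /eqP[defG xq yP xy]; exists x, y.
Qed.

Lemma gens_hom (gT : finGroupType) (G : {group gT}) (q P r : nat) (x y : gT) :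
  <[x]> <*> <[y]> = G -> x ^+ q = 1 -> y ^+ P = 1 -> y * x * y^-1 = x ^+ r ->
  G \homg Grp (x : y : x ^+ q, y ^+ P, y * x * y^-1 = x ^+ r).
Proof.
move=> defG xq yP xy; apply/existsP; exists (x, y); rewrite /= !xpair_eqE.
by rewrite defG xq yP xy !eqxx.
Qed.

Lemma model_card (p n : nat) (gT : finGroupType) (G : {group gT}) :
  prime p -> odd p -> 1 < n ->
  G \isog Grp (x : y : x ^+ (p ^ n)%N, y ^+ (p ^ n.-1)%N, y * x * y^-1 = x ^+ p.+1) ->
  (p ^ n.-1 * p ^ n)%N %| #|G|.
Proof.
move=> pp op n1 isoG.
have p1 := prime_gt1 pp.
have q1 : 1 < p ^ n by rewrite -(expn0 p) ltn_exp2l // ltnW.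
have P1 : 1 < p ^ n.-1 by rewrite -(expn0 p) ltn_exp2l // -ltnS prednK // ltnW.
have [s [As os sb]] := aut_s pp op n1.
have ds : #[s] %| p ^ n.-1 by rewrite os.
have isoH := @Extremal.Grp (p ^ n) (p ^ n.-1) p.+1 P1 q1 (ex_intro _ s (And3 As ds sb)).
rewrite -(@Extremal.card (p ^ n) (p ^ n.-1) p.+1 P1 q1).
apply: card_homg.
rewrite isoG.
have [x [y [defH xq yP xy]]] := hom_gens2 (isoGrp_hom isoH).
apply: (gens_hom (x := x) (y := y^-1)) => //.
- by rewrite cycleV.
- by rewrite expgVn yP invg1.
- by rewrite invgK -mulgA -conjgE xy.
Qed.

Lemma struct (p n : nat) (gT : finGroupType) (G : {group gT}) :
  prime p -> odd p -> 2 < n ->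
  G \isog Grp (x : y : x ^+ (p ^ n)%N, y ^+ (p ^ n.-1)%N, y * x * y^-1 = x ^+ p.+1) ->
  exists x w : gT,
    [/\ [/\ x \in G, w \in G, G :=: <[x]> * <[w]>, G :=: <[w]> * <[x]>
          & G \subset 'N(<[x]>)],
        x ^+ (p ^ n) = 1, w ^+ (p ^ n.-1) = 1, x ^ w = x ^+ p.+1
      & [/\ x ^+ (p ^ n.-2) != 1 & p.-group G]].
Proof.
move=> pp op n2 isoG.
have p1 := prime_gt1 pp; have p0 := ltnW p1.
have [x [y [defG xq yP xy]]] := hom_gens (isoGrp_hom isoG).
set w := y^-1.
have xw : x ^ w = x ^+ p.+1 by rewrite /w conjgE invgK mulgA.
have wP : w ^+ (p ^ n.-1) = 1 by rewrite /w expgVn yP invg1.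
have defG' : <[x]> <*> <[w]> = G by rewrite /w cycleV.
have nXW : <[w]> \subset 'N(<[x]>) by rewrite norms_cycle xw groupX ?cycle_id.
have nXG : G \subset 'N(<[x]>).
  by rewrite -defG' join_subG nXW normG.
have GXW : G :=: <[x]> * <[w]> by rewrite -defG' norm_joinEr.
have GWX : G :=: <[w]> * <[x]> by rewrite -defG' joingC norm_joinEl.
have xG : x \in G by rewrite -defG' mem_gen // inE cycle_id.
have wG : w \in G by rewrite -defG' mem_gen // inE cycle_id orbT.
have cardG : #|G| %| (#[x] * #[w])%N.
  by rewrite /order GXW mul_cardG dvdn_mulr.
have ox : #[x] %| p ^ n by rewrite order_dvdn xq.
have ow : #[w] %| p ^ n.-1 by rewrite order_dvdn wP.
exists x, w; split=> //; split=> //.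
  apply/negP => /eqP xq2.
  have ox2 : #[x] %| p ^ n.-2 by rewrite order_dvdn xq2.
  have := dvdn_trans (model_card pp op (ltnW n2) isoG) cardG.
  move/dvdn_leq; rewrite muln_gt0 !order_gt0 => /(_ isT).
  have e0 : forall k, 0 < p ^ k by move=> k; rewrite expn_gt0 p0.
  have h1 := leq_mul (dvdn_leq (e0 _) ox2) (dvdn_leq (e0 _) ow) => h2.
  have := leq_trans h2 h1; rewrite -!expnD leq_exp2l //.
  move: n2; clear; lia.
rewrite /pgroup; apply: (pnat_dvd cardG); apply: (pnat_dvd (dvdn_mul ox ow)).
by rewrite -expnD pnatX pnat_id.
Qed.

Lemma cycle_comm (gT : finGroupType) (x a b : gT) :
  a \in <[x]> -> b \in <[x]> -> commute a b.
Proof.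
by case/cycleP=> i -> /cycleP [j ->]; apply: commuteX2; apply: commute_refl.
Qed.

Lemma conj_pow (gT : finGroupType) (x w : gT) (r b c : nat) :
  x ^ w = x ^+ r -> (x ^+ c) ^ (w ^+ b) = x ^+ (c * r ^ b).
Proof.
move=> xw.
have h : forall b, x ^ (w ^+ b) = x ^+ (r ^ b).
  elim => [|k IH]; first by rewrite expg0 conjg1 expn0 expg1.
  by rewrite expgSr conjgM IH conjXg xw -expgM expnS.
by rewrite conjXg h -expgM mulnC.
Qed.

Lemma comm_pow (gT : finGroupType) (x w : gT) (p m : nat) :
  x ^ w = x ^+ p.+1 -> [~ x ^+ m, w] = x ^+ (m * p).
Proof.
move=> xw; rewrite commgEl.
have := @conj_pow _ x w p.+1 1 m xw; rewrite expn1 => ->.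
by rewrite mulnS expgD mulKg.
Qed.

Lemma tw (p n : nat) (gT : finGroupType) (G : {group gT}) (x w g : gT) :
  prime p -> odd p -> 1 < n -> 
  G :=: <[x]> * <[w]> -> G :=: <[w]> * <[x]> -> G \subset 'N(<[x]>) ->
  x ^+ (p ^ n) = 1 -> x ^ w = x ^+ p.+1 -> g \in G ->
  group_set (twisted_class_inner G g).
Proof.
move=> pp op n1 GXW GWX nXG xq xw gG.
pose chi z := z^-1 * (g * z * g^-1).
have SE : twisted_class_inner G g = [set chi z | z in G] by [].
have [c [d gE]] : exists c d, g = x ^+ c * w ^+ d.
  move: gG; rewrite GXW => /mulsgP [a b /cycleP [c ->] /cycleP [d ->] ->].
  by exists c, d.
have chiX : forall u, u \in <[x]> -> chi u \in <[x]>.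
  move=> u ux; rewrite /chi groupM ?groupV //.
  have -> : g * u * g^-1 = u ^ (g^-1) by rewrite conjgE invgK mulgA.
  by rewrite memJ_norm // (subsetP nXG) ?groupV.
have chiM : forall v u, chi v \in <[x]> -> u \in <[x]> -> chi (v * u) = chi v * chi u.
  move=> v u cv ux.
  have -> : chi (v * u) = u^-1 * chi v * (g * u * g^-1).
    by rewrite /chi invMg !mulgA mulgKV.
  by rewrite (cycle_comm (groupVr ux) cv) -mulgA.
have chiW : forall b, chi (w ^+ b) = x ^+ (c * p.+1 ^ b) * (x ^+ c)^-1.
  move=> b; rewrite -(conj_pow b c xw) /chi gE conjgE.
  have wdb : w ^+ d * w ^+ b = w ^+ b * w ^+ d by rewrite -!expgD addnC.
  rewrite !invMg !mulgA -(mulgA _ (w ^+ d)) wdb !mulgA mulgK.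
  by [].
have chiWX : forall b, chi (w ^+ b) \in <[x]>.
  by move=> b; rewrite chiW groupM ?groupV ?mem_cycle.
have chiWW : forall b1 b2, exists b3, chi (w ^+ b1) * chi (w ^+ b2) = chi (w ^+ b3).
  move=> b1 b2; have [b3 e] := @r_sum p n b1 b2 pp op n1.
  exists b3; rewrite !chiW.
  set y1 := x ^+ (c * p.+1 ^ b1); set y2 := x ^+ (c * p.+1 ^ b2).
  set y3 := x ^+ (c * p.+1 ^ b3).
  have -> : y1 * (x ^+ c)^-1 * (y2 * (x ^+ c)^-1) = y1 * y2 * (x ^+ c)^-1 * (x ^+ c)^-1.
    rewrite !mulgA -(mulgA y1) (cycle_comm (groupVr (mem_cycle x c)) (mem_cycle x _)).
    by rewrite !mulgA.
  have -> : y1 * y2 = y3 * x ^+ c.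
    rewrite /y1 /y2 /y3 -!expgD -mulnDr -(expg_mod _ xq) -modnMmr e modnMmr.
    by rewrite expg_mod // mulnDr muln1.
  by rewrite mulgK.
rewrite SE; apply/group_setP; split.
  by apply/imsetP; exists 1; rewrite ?group1 // /chi invg1 mul1g mulg1 mulgV.
move=> s1 s2 /imsetP [z1 z1G ->] /imsetP [z2 z2G ->].
move: z1G z2G; rewrite GWX.
move=> /mulsgP [v1 u1 /cycleP [b1 ->] u1x ->] /mulsgP [v2 u2 /cycleP [b2 ->] u2x ->].
rewrite !chiM //.
have [b3 e3] := chiWW b1 b2.
apply/imsetP; exists (w ^+ b3 * (u1 * u2)); first by rewrite mem_mulg ?mem_cycle ?groupM.
have cc := cycle_comm (chiX _ u1x) (chiWX b2).
have E : chi (w ^+ b1) * chi u1 * (chi (w ^+ b2) * chi u2)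
       = chi (w ^+ b3) * (chi u1 * chi u2).
  move: cc e3; set A := chi (w ^+ b1); set B := chi (w ^+ b2); set C := chi u1.
  set D := chi u2; set A3 := chi (w ^+ b3) => cc <-.
  by rewrite -[LHS]mulgA (mulgA C) cc !mulgA.
rewrite E; symmetry; rewrite (chiM (w ^+ b3) (u1 * u2) (chiWX b3) (groupM u1x u2x)).
exact: (congr1 (fun t => chi (w ^+ b3) * t) (chiM u1 u2 (chiX _ u1x) u2x)).
Qed.

Lemma part1 (p n : nat) (gT : finGroupType) (G : {group gT}) :
  prime p -> 2 < p -> 2 < n ->
  G \isog Grp (x : y : x ^+ (p ^ n)%N, y ^+ (p ^ n.-1)%N, y * x * y^-1 = x ^+ p.+1) ->
  [/\ nilpotent G, n.-1 <= nil_class G &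
      forall g, g \in G -> group_set (twisted_class_inner G g)].
Proof.
move=> pp p2 n2 isoG.
have op : odd p by case: (even_prime pp) => // p2E; rewrite p2E in p2.
have [x [w [[xG wG GXW GWX nXG] xq wP xw [xn pG]]]] := struct pp op n2 isoG.
have nilG := pgroup_nil pG.
have lcnx : forall k, x ^+ (p ^ k) \in 'L_k.+1(G).
  elim=> [|k IH]; first by rewrite lcn1 expn0 expg1.
  by rewrite lcnSn expnSr -(comm_pow _ xw) mem_commg.
split=> //.
  rewrite leqNgt; apply/negP => lt.
  have : nil_class G <= n.-2 by move: lt n2; clear; lia.
  move/(lcn_nil_classP _ nilG) => L1.
  move: (lcnx n.-2); rewrite L1 inE => /eqP x1.
  by rewrite x1 eqxx in xn.
move=> g gG; exact: (tw pp op (ltnW n2) GXW GWX nXG xq xw gG).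
Qed.


Section Prod.
Variable hT : nat -> finGroupType.
Local Notation T := (dprodT hT).
Local Notation mul := (@dprod_mul hT).
Local Notation inv := (@dprod_inv hT).
Local Notation one := (@dprod_one hT).

Lemma acommE (f g : T) i : acomm mul inv f g i = [~ f i, g i].
Proof. by rewrite /acomm /dprod_mul /dprod_inv commgEl conjgE !mulgA. Qed.

Lemma lcs_comp k (f : T) : lcs mul inv one k f -> forall i, f i \in 'L_k.+1([set: hT i]).
Proof.
elim: k f => [|k IH] f /=; first by move=> _ i; rewrite lcn1 inE.
elim=> [|t [a [b [la ->]]]|t1 t2 _ IH1 _ IH2|t1 _ IH1] i.
- exact: group1.
- by rewrite acommE lcnSn mem_commg ?IH ?inE.
- exact: groupM (IH1 i) (IH2 i).
- exact: groupVr (IH1 i).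
Qed.

Definition emb k (h : hT k) : T := fun j =>
  match PeanoNat.Nat.eq_dec k j with left e => eq_rect k hT h j e | right _ => 1 end.

Lemma emb_mul k a b : mul (@emb k a) (@emb k b) = @emb k (a * b).
Proof.
apply: functional_extensionality_dep => j; rewrite /dprod_mul /emb.
by case: (PeanoNat.Nat.eq_dec k j) => [e|_]; [case: j / e | rewrite mulg1].
Qed.

Lemma emb_inv k a : inv (@emb k a) = @emb k a^-1.
Proof.
apply: functional_extensionality_dep => j; rewrite /dprod_inv /emb.
by case: (PeanoNat.Nat.eq_dec k j) => [e|_]; [case: j / e | rewrite invg1].
Qed.

Lemma emb_at k a : @emb k a k = a.
Proof.
rewrite /emb; case: (PeanoNat.Nat.eq_dec k k) => [e|//].
by rewrite (eq_axiomK e).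
Qed.

Lemma emb_acomm k a b : acomm mul inv (@emb k a) (@emb k b) = @emb k [~ a, b].
Proof. by rewrite /acomm !emb_inv !emb_mul commgEl conjgE !mulgA. Qed.

End Prod.

Lemma next_primeP m : prime (next_prime m) /\ m < next_prime m.
Proof. by rewrite /next_prime; case: ex_minnP => q /andP [pq mq] _. Qed.

Lemma nth_prime_ge k : k < nth_prime k.
Proof.
elim: k => [//|k IH] /=; have [_ h] := next_primeP (nth_prime k).
exact: leq_ltn_trans IH h.
Qed.

Lemma nth_prime_prime k : prime (nth_prime k.+1).
Proof. exact: (next_primeP _).1. Qed.


Theorem mainTheorem14 :
  (forall (p n : nat), prime p -> 2 < p -> 2 < n ->
   forall (gT : finGroupType) (G : {group gT}),
     G \isog Grp (x : y : x ^+ (p ^ n)%N, y ^+ (p ^ n.-1)%N,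
                           y * x * y^-1 = x ^+ p.+1) ->
     [/\ nilpotent G, n.-1 <= nil_class G &
         forall g, g \in G -> group_set (twisted_class_inner G g)])
  /\
  (forall (gT : nat -> finGroupType),
     (forall k : nat, [set: gT k.+3] \isog
        Grp (x : y : x ^+ (nth_prime k.+3 ^ k.+3)%N,
                      y ^+ (nth_prime k.+3 ^ (k.+3).-1)%N,
                      y * x * y^-1 = x ^+ (nth_prime k.+3).+1)) ->
     let T := dprodT (fun k => gT k.+3) in
     let mul := @dprod_mul (fun k => gT k.+3) in
     let inv := @dprod_inv (fun k => gT k.+3) in
     let one := @dprod_one (fun k => gT k.+3) in
     [/\ aresidually_nilpotent mul inv one,
         ~ anilpotent mul inv one &
         forall g : T, is_subgroup mul inv one
                         (twisted_class_e mul inv (ainner mul inv g))]).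
Proof.
split.
  move=> p n pp p2 n2 gT G isoG; exact: (part1 pp p2 n2 isoG).
move=> gT Hiso T mul inv one.
have pk : forall k, prime (nth_prime k.+3) by move=> k; apply: nth_prime_prime.
have p2k : forall k, 2 < nth_prime k.+3.
  by move=> k; apply: leq_ltn_trans (nth_prime_ge k.+3).
have n2k : forall k, 2 < k.+3 by [].
have Pk := fun k => @part1 _ _ _ [set: gT k.+3]%G (pk k) (p2k k) (n2k k) (Hiso k).
split.
- move=> f Hf; apply: functional_extensionality_dep => i.
  have [nilG _ _] := Pk i.
  have L1 := (lcn_nil_classP (nil_class [set: gT i.+3]%G) nilG) (leqnn _).
  have H := @lcs_comp (fun k => gT k.+3) _ f (Hf (nil_class [set: gT i.+3]%G)) i.
  have : f i \in 'L_(nil_class [set: gT i.+3]%G).+1([set: gT i.+3]%G) := H.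
  by rewrite L1 inE => /eqP.
- case=> k Hk.
  have oddk : odd (nth_prime k.+3).
    by case: (even_prime (pk k)) => // e; have := p2k k; rewrite e.
  have [x [w [_ _ _ xw [xn _]]]] := struct (pk k) oddk (n2k k) (Hiso k).
  set P := nth_prime k.+3 in xw xn.
  have lx : forall m, lcs mul inv one m (@emb (fun k => gT k.+3) k (x ^+ (P ^ m))).
    elim=> [//|m IH] /=; apply: agen_in.
    exists (@emb (fun k => gT k.+3) k (x ^+ (P ^ m))), (@emb (fun k => gT k.+3) k w).
    by split=> //; rewrite emb_acomm (comm_pow _ xw) expnSr.
  have := congr1 (fun f => f k) (Hk _ (lx k)); rewrite /= emb_at => x1.
  by move: xn; rewrite /= expnSr expgM x1 expg1n eqxx.
- move=> g.
  pose S i := twisted_class_inner [set: gT i.+3] (g i).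
  have gs : forall i, group_set (S i) by move=> i; have [_ _ ->] := Pk i; rewrite ?inE.
  have SE : forall f : T, twisted_class_e mul inv (ainner mul inv g) f <-> forall i, f i \in S i.
    move=> f; split.
      by case=> z -> i; apply: (imset_f (fun z => z^-1 * (g i * z * (g i)^-1))); rewrite inE.
    move=> Hf.
    pose z i := odflt 1 [pick z : gT i.+3 | f i == z^-1 * (g i * z * (g i)^-1)].
    exists z; apply: functional_extensionality_dep => i.
    rewrite /mul /inv /ainner /dprod_mul /dprod_inv /z /=.
    case: pickP => [z' /eqP //|none].
    by case/imsetP: (Hf i) => z0 _ e; have := none z0; rewrite e eqxx.
  split.
  + apply/SE => i; exact: (group1 (Group (gs i))).
  + move=> a b /SE Ha /SE Hb; apply/SE => i; exact: (groupM (G := Group (gs i)) (Ha i) (Hb i)).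
  + move=> a /SE Ha; apply/SE => i; exact: (groupVr (G := Group (gs i)) (Ha i)).
Qed.
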